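(* For any $\Delta>0$ there exist a linear mixture MDP structure (feature map and reward) and parameters $\theta^*,\theta^{\mathrm{off},*}$ with $\|\theta^*-\theta^{\mathrm{off},*}\|_2=\Delta$ such that $\sup_\pi|V^\pi_1(s_1)-V^{\mathrm{off},\pi}_1(s_1)|=\Omega(\Delta)$.
   Context: Offline and online linear mixture MDPs share state space, action space, horizon, reward and feature map $\phi$ (with $\sum_{s'}|\phi_j(s'\mid s,a)|\le1$), and have transitions $P(s'\mid s,a)=\langle\theta^*,\phi(s'\mid s,a)\rangle$ and $P^{\mathrm{off}}(s'\mid s,a)=\langle\theta^{\mathrm{off},*},\phi(s'\mid s,a)\rangle$. $V^\pi_1$ and $V^{\mathrm{off},\pi}_1$ are the value functions at stage 1 of policy $\pi$ under $P$ and $P^{\mathrm{off}}$, evaluated at the initial state $s_1$; the supremum is over policies. *)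

(* Defs.v *)
From HB Require Import structures.
From mathcomp Require Import all_boot all_order all_algebra.
From mathcomp Require Import boolp classical_sets reals.
Set Implicit Arguments. Unset Strict Implicit. Unset Printing Implicit Defensive.
Import Order.TTheory GRing.Theory Num.Theory.
Local Open Scope ring_scope.

Section LinearMixture.
Variable R : realType.
Variables (nS nA d : nat).
Notation S := 'I_nS.
Notation A := 'I_nA.

(* feature map: phi s' s a j = phi_j(s' | s, a) *)
Definition feature_ok (phi : S -> S -> A -> 'I_d -> R) : Prop :=
  forall (s : S) (a : A) (j : 'I_d), \sum_(s' : S) `|phi s' s a j| <= 1.

Definition mixP (theta : 'I_d -> R) (phi : S -> S -> A -> 'I_d -> R)
  (s' s : S) (a : A) : R := \sum_(j < d) theta j * phi s' s a j.

Definition valid_param (theta : 'I_d -> R) (phi : S -> S -> A -> 'I_d -> R) : Prop :=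
  forall (s : S) (a : A),
    (forall s' : S, 0 <= mixP theta phi s' s a) /\
    \sum_(s' : S) mixP theta phi s' s a = 1.

Definition norm2 (v : 'I_d -> R) : R := Num.sqrt (\sum_(j < d) v j ^+ 2).

(* rewards r h s a in [0,1], stages h = 0, ..., H-1 (stage h+1 of the paper) *)
Definition reward_ok (H : nat) (r : nat -> S -> A -> R) : Prop :=
  forall h s a, (h < H)%N -> 0 <= r h s a <= 1.

(* (Markov, possibly randomized) policy: pi h s a = pi_{h+1}(a | s) *)
Definition is_policy (H : nat) (pi : nat -> S -> A -> R) : Prop :=
  forall h s, (h < H)%N ->
    (forall a, 0 <= pi h s a) /\ \sum_(a : A) pi h s a = 1.

(* value with n stages remaining (current stage index H - n) *)
Fixpoint valn (P : S -> S -> A -> R) (r : nat -> S -> A -> R)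
    (pi : nat -> S -> A -> R) (H n : nat) (s : S) : R :=
  match n with
  | 0 => 0
  | n'.+1 =>
      \sum_(a : A) pi (H - n)%N s a *
        (r (H - n)%N s a + \sum_(s' : S) P s' s a * valn P r pi H n' s')
  end.

Definition V1 (P : S -> S -> A -> R) (r : nat -> S -> A -> R)
    (pi : nat -> S -> A -> R) (H : nat) (s : S) : R := valn P r pi H H s.

Definition sup_value_gap (phi : S -> S -> A -> 'I_d -> R) (r : nat -> S -> A -> R)
    (H : nat) (s1 : S) (theta theta_off : 'I_d -> R) : R :=
  sup [set x : R | exists pi, is_policy H pi /\
     x = `|V1 (mixP theta phi) r pi H s1 - V1 (mixP theta_off phi) r pi H s1| ].

End LinearMixture.

(* Main.v *)
Require Import Defs.
From HB Require Import structures.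
From mathcomp Require Import all_boot all_order all_algebra.
From mathcomp Require Import boolp classical_sets reals.
From mathcomp Require Import ring lra.
Import Order.TTheory GRing.Theory Num.Theory.
Local Open Scope ring_scope.

Section Aux.
Variable R : realType.

Definition o0 : 'I_2 := ord0.
Definition o1 : 'I_2 := @Ordinal 2 1 isT.

Definition rw (h : nat) (s : 'I_2) (a : 'I_1) : R := if s == o0 then 1 else 0.

Lemma sum2 (F : 'I_2 -> R) : \sum_(i < 2) F i = F o0 + F o1.
Proof. rewrite big_ord_recl big_ord1; congr (_ + F _); exact: val_inj. Qed.

Lemma I2cases (s : 'I_2) : s = o0 \/ s = o1.
Proof. case: s => [[|[|k]] Hs]. by left; apply: val_inj. by right; apply: val_inj. by []. Qed.

Lemma valn_formula (P : 'I_2 -> 'I_2 -> 'I_1 -> R) (q : R) (pi : nat -> 'I_2 -> 'I_1 -> R) H :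
  (forall s a, P o0 s a = 1 - q) -> (forall s a, P o1 s a = q) ->
  is_policy H pi ->
  forall n, (n < H)%N ->
    valn P rw pi H n.+1 o0 = n.+1%:R - n%:R * q /\
    valn P rw pi H n.+1 o1 = n%:R - n%:R * q.
Proof.
move=> HP0 HP1 Hpi.
have pi1 : forall k s, (k < H)%N -> pi k s ord0 = 1.
  by move=> k s Hk; have [_] := Hpi k s Hk; rewrite big_ord1.
elim=> [|n IH] Hn.
  rewrite /= !big_ord1 !pi1 ?subn1 ?ltn_predL ?(leq_ltn_trans _ Hn) //.
  rewrite /rw /= !big1 ?mul0r ?subr0 ?mul1r ?addr0 // => *; exact: mulr0.
have [IH0 IH1] := IH (ltnW Hn).
have Hk : (H - n.+2 < H)%N.
  by rewrite ltn_subrL; apply/andP; split => //; apply: leq_ltn_trans Hn.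
have E : forall s, valn P rw pi H n.+2 s =
   rw (H - n.+2) s ord0 + (P o0 s ord0 * valn P rw pi H n.+1 o0 +
                            P o1 s ord0 * valn P rw pi H n.+1 o1).
  move=> s; rewrite [valn _ _ _ _ n.+2 _]/= big_ord1 pi1 // mul1r.
  by rewrite sum2.
rewrite !E IH0 IH1 !HP0 !HP1 /rw /=.
rewrite -!natr1; split; ring.
Qed.

End Aux.

Theorem propositionB2 (R : realType) :
  exists c : R, 0 < c /\
  forall Delta : R, 0 < Delta ->
  exists (nS nA d H : nat) (s1 : 'I_nS) (phi : 'I_nS -> 'I_nS -> 'I_nA -> 'I_d -> R)
         (r : nat -> 'I_nS -> 'I_nA -> R) (theta theta_off : 'I_d -> R),
    (0 < nA)%N /\ feature_ok phi /\ reward_ok H r /\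
    valid_param theta phi /\ valid_param theta_off phi /\
    norm2 (fun j => theta j - theta_off j) = Delta /\
    sup_value_gap phi r H s1 theta theta_off >= c * Delta.
Proof.
exists (1/2); split; first by lra.
move=> D D0.
have HK := Num.Theory.archi_boundP (ltW D0).
set K := Num.bound D in HK.
have K0 : 0 < K%:R :> R by apply: lt_trans HK.
set beta : R := (2 * K%:R)^-1.
have b0 : 0 < beta by rewrite /beta invr_gt0; lra.
have bK : beta * K%:R = 1/2 by rewrite /beta; field; lra.
have K1 : 1 <= K%:R :> R.
  by rewrite ler1n -(ltr0n R).
have bD : beta * D <= 1/2.
  have : beta * D <= beta * K%:R by rewrite ler_pM2l //; exact: ltW.
  by rewrite bK.
have bD0 : 0 <= beta * D by rewrite mulr_ge0 // ltW.
have b1 : beta <= 1/2.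
  have : beta * 1 <= beta * K%:R by rewrite ler_pM2l.
  by rewrite bK mulr1.
pose phi := fun (s' s : 'I_2) (a : 'I_1) (j : 'I_2) =>
  if j == o0 then (if s' == o0 then 1 else 0 : R) else (if s' == o0 then - beta else beta).
pose th := fun j : 'I_2 => if j == o0 then 1 else 0 : R.
pose tho := fun j : 'I_2 => if j == o0 then 1 else D.
have o10 : (o1 == o0) = false by [].
have M1 : forall s a, mixP th phi o0 s a = 1 - 0 /\ mixP th phi o1 s a = 0.
  move=> s a; rewrite /mixP !sum2 /th /phi o10 eqxx; split; ring.
have M2 : forall s a, mixP tho phi o0 s a = 1 - beta * D /\ mixP tho phi o1 s a = beta * D.
  move=> s a; rewrite /mixP !sum2 /tho /phi o10 eqxx; split; ring.
exists 2%N, 1%N, 2%N, K.+1, o0, phi, (@rw R), th, tho.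
split; first by [].
split.
  move=> s a j; rewrite sum2 /phi o10 eqxx.
  case: (I2cases j) => ->; rewrite ?eqxx ?o10 ?normr1 ?normr0 ?normrN ?ger0_norm ?addr0; lra.
split.
  move=> h s a _; rewrite /rw; case: ifP => _; lra.
split.
  move=> s a; have [A B] := M1 s a; split.
    by move=> s'; case: (I2cases s') => ->; rewrite ?A ?B; lra.
  by rewrite sum2 A B; lra.
split.
  move=> s a; have [A B] := M2 s a; split.
    by move=> s'; case: (I2cases s') => ->; rewrite ?A ?B; lra.
  by rewrite sum2 A B; lra.
split.
  rewrite /norm2 sum2 /th /tho o10 eqxx subrr expr0n /= add0r sub0r sqrrN sqrtr_sqr.
  by rewrite ger0_norm //; exact: ltW.
have val : forall pi, is_policy K.+1 pi ->
    `|V1 (mixP th phi) (@rw R) pi K.+1 o0 - V1 (mixP tho phi) (@rw R) pi K.+1 o0| = D / 2.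
  move=> pi Hpi; rewrite /V1.
  have [E1 _] := @valn_formula R (mixP th phi) 0 pi K.+1 (fun s a => proj1 (M1 s a)) (fun s a => proj2 (M1 s a)) Hpi K (ltnSn K).
  have [E2 _] := @valn_formula R (mixP tho phi) (beta * D) pi K.+1 (fun s a => proj1 (M2 s a)) (fun s a => proj2 (M2 s a)) Hpi K (ltnSn K).
  rewrite E1 E2.
  have -> : K.+1%:R - K%:R * 0 - (K.+1%:R - K%:R * (beta * D)) = D / 2 :> R.
    have -> : K%:R * (beta * D) = (beta * K%:R) * D by ring.
    rewrite bK; ring.
  by rewrite ger0_norm //; lra.
rewrite /sup_value_gap.
have -> : [set x : R | exists pi, is_policy K.+1 pi /\
     x = `|V1 (mixP th phi) (@rw R) pi K.+1 o0 - V1 (mixP tho phi) (@rw R) pi K.+1 o0| ]%classic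
     = [set D / 2]%classic.
  apply/seteqP; split => x /=.
    by move=> [pi [Hpi ->]]; rewrite val.
  move=> ->; exists (fun _ _ _ => 1); split; last by rewrite val //; move=> h s _; split => //; rewrite big_ord1.
  by move=> h s _; split => //; rewrite big_ord1.
rewrite sup1; lra.
Qed.
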